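(* Let $(V,\mathcal H,\iota,W)$ be an abelian functional theory with set of weights $\Omega$. Suppose $\rho_*$ lies in the relative interior of $\mathrm{conv}(\Omega)$, and let $|\Phi\rangle$ be a minimizer of the pure-state constrained search at $\rho_*$, i.e. $\|\Phi\|=1$, $\iota^*(|\Phi\rangle\langle\Phi|)=\rho_*$, and $\langle\Psi|W|\Psi\rangle\ge\langle\Phi|W|\Phi\rangle$ for every normalized $|\Psi\rangle$ with $\iota^*(|\Psi\rangle\langle\Psi|)=\rho_*$. If $|\delta\rangle$ is a weight vector with $\langle\delta|\Phi\rangle=0$, then $\langle\delta|W|\Phi\rangle=0$.
   Context: A generalized functional theory is a tuple $(V,\mathcal H,\iota,W)$ with $V$ a finite-dimensional real vector space, $\mathcal H$ a finite-dimensional complex Hilbert space, $\iota:V\to i\mathfrak u(\mathcal H)$ linear into the Hermitian operators, $W$ Hermitian; it is abelian if all $\iota(v)$ commute. States are linear functionals via the trace and $\iota^*$ is the dual map, $\langle\iota^*(\Gamma),v\rangle=\mathrm{Tr}(\Gamma\iota(v))$. A weight is $\alpha\in V^*$ such that some nonzero $\psi$ satisfies $\iota(v)\psi=\langle\alpha,v\rangle\psi$ for all $v$; such a nonzero $\psi$ is a weight vector. $\Omega$ is the set of weights. *)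

(* Defs.v *)
(* R : realType (the reals), C := R[i] (the complex numbers,
   from mathcomp-real-closed).  V = R^m (coordinates fixed), V^* = R^m via the
   standard pairing, H = C^n (column vectors). *)
From HB Require Import structures.
From mathcomp Require Import all_boot all_order all_algebra.
From mathcomp Require Import reals complex.
Set Implicit Arguments. Unset Strict Implicit. Unset Printing Implicit Defensive.
Import Order.TTheory GRing.Theory Num.Theory.
Local Open Scope ring_scope.
Local Open Scope complex_scope.

Section FT.
Variables (R : realType) (m n : nat).
Local Notation C := (R[i]).

Definition adj (p q : nat) (A : 'M[C]_(p, q)) : 'M[C]_(q, p) :=
  map_mx (@conjc R) A^T.

Definition herm_mx (A : 'M[C]_n) : Prop := adj A = A.

Definition inner (a b : 'cV[C]_n) : C := (adj a *m b) 0 0.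

(* the linear map iota : V -> Herm(H), determined by the images A k of the
   standard basis vectors of V = R^m *)
Definition iota (A : 'I_m -> 'M[C]_n) (v : 'rV[R]_m) : 'M[C]_n :=
  \sum_(k < m) (v 0 k)%:C *: A k.

Definition pairing (a v : 'rV[R]_m) : R := \sum_(k < m) a 0 k * v 0 k.

(* iota^*(Gamma) = rho  :<->  <rho, v> = Tr(Gamma iota(v)) for all v *)
Definition iota_star_is (A : 'I_m -> 'M[C]_n) (G : 'M[C]_n) (rho : 'rV[R]_m)
  : Prop := forall v : 'rV[R]_m, (pairing rho v)%:C = \tr (G *m iota A v).

Definition proj (phi : 'cV[C]_n) : 'M[C]_n := phi *m adj phi.

Definition weight_vector (A : 'I_m -> 'M[C]_n) (alpha : 'rV[R]_m)
  (psi : 'cV[C]_n) : Prop :=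
  psi != 0 /\ forall v : 'rV[R]_m, iota A v *m psi = (pairing alpha v)%:C *: psi.

Definition is_weight (A : 'I_m -> 'M[C]_n) (alpha : 'rV[R]_m) : Prop :=
  exists psi, weight_vector A alpha psi.

Definition conv (S : 'rV[R]_m -> Prop) (x : 'rV[R]_m) : Prop :=
  exists (k : nat) (p : 'I_k -> 'rV[R]_m) (t : 'I_k -> R),
    (forall i, S (p i)) /\ (forall i, 0 <= t i) /\ \sum_(i < k) t i = 1 /\
    x = \sum_(i < k) t i *: p i.

Definition aff (S : 'rV[R]_m -> Prop) (x : 'rV[R]_m) : Prop :=
  exists (k : nat) (p : 'I_k -> 'rV[R]_m) (t : 'I_k -> R),
    (forall i, S (p i)) /\ \sum_(i < k) t i = 1 /\
    x = \sum_(i < k) t i *: p i.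

Definition dist2 (x y : 'rV[R]_m) : R := \sum_(k < m) (x 0 k - y 0 k) ^+ 2.

Definition relint (S : 'rV[R]_m -> Prop) (x : 'rV[R]_m) : Prop :=
  S x /\ exists e : R, 0 < e /\
    forall y, aff S y -> dist2 y x < e ^+ 2 -> S y.

End FT.

(* Main.v *)
Require Import Defs.
From HB Require Import structures.
From mathcomp Require Import all_boot all_order all_algebra.
From mathcomp Require Import reals complex.
From mathcomp Require Import ring lra.
From Stdlib Require Import IndefiniteDescription.
Import Order.TTheory GRing.Theory Num.Theory.
Local Open Scope ring_scope.
Local Open Scope complex_scope.
Set Implicit Arguments. Unset Strict Implicit. Unset Printing Implicit Defensive.

Section Inner.
Variables (R : realType) (n : nat).
Local Notation C := (R[i]).
Implicit Types (u v w : 'cV[C]_n) (M : 'M[C]_n).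

Lemma adjD p q (a b : 'M[C]_(p, q)) : adj (a + b) = adj a + adj b.
Proof. by rewrite /adj linearD /= map_mxD. Qed.

Lemma adjZ p q c (a : 'M[C]_(p, q)) : adj (c *: a) = c^* *: adj a.
Proof. by apply/matrixP => i j; rewrite !mxE rmorphM. Qed.

Lemma adjM p q r (a : 'M[C]_(p, q)) (b : 'M[C]_(q, r)) : adj (a *m b) = adj b *m adj a.
Proof. by rewrite /adj trmx_mul map_mxM. Qed.

Lemma innerDr u v w : inner u (v + w) = inner u v + inner u w.
Proof. by rewrite /inner mulmxDr mxE. Qed.
Lemma innerZr u c v : inner u (c *: v) = c * inner u v.
Proof. by rewrite /inner -scalemxAr mxE. Qed.
Lemma innerDl u v w : inner (v + w) u = inner v u + inner w u.
Proof. by rewrite /inner adjD mulmxDl mxE. Qed.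
Lemma innerZl u c v : inner (c *: v) u = c^* * inner v u.
Proof. by rewrite /inner adjZ -scalemxAl mxE. Qed.
Lemma inner_sumr u (I : finType) (P : pred I) (F : I -> 'cV[C]_n) :
  inner u (\sum_(i | P i) F i) = \sum_(i | P i) inner u (F i).
Proof. by rewrite /inner mulmx_sumr summxE. Qed.
Lemma inner_suml u (I : finType) (P : pred I) (F : I -> 'cV[C]_n) :
  inner (\sum_(i | P i) F i) u = \sum_(i | P i) inner (F i) u.
Proof.
rewrite /inner.
have -> : adj (\sum_(i | P i) F i) = \sum_(i | P i) adj (F i).
  apply/matrixP => a b; rewrite !mxE summxE rmorph_sum summxE.
  by apply: eq_bigr => i _; rewrite !mxE.
by rewrite mulmx_suml summxE.
Qed.
Lemma inner_conj u v : inner v u = (inner u v)^*.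
Proof.
rewrite /inner !mxE rmorph_sum; apply: eq_bigr => j _.
by rewrite !mxE rmorphM /= conjcK mulrC.
Qed.
Lemma inner_herm M u v : herm_mx M -> inner u (M *m v) = inner (M *m u) v.
Proof. by move=> hM; rewrite /inner adjM hM mulmxA. Qed.
Lemma inner_herm_conj M u v : herm_mx M -> inner u (M *m v) = (inner v (M *m u))^*.
Proof. by move=> hM; rewrite inner_herm // inner_conj. Qed.
Lemma conjCR (x : R) : Num.conj (x%:C : C) = x%:C.
Proof. exact: conjc_real. Qed.
End Inner.


Section Weights.
Variables (R : realType) (m n : nat) (A : 'I_m -> 'M[R[i]]_n).
Local Notation C := (R[i]).

Lemma iota_delta k : Defs.iota A (delta_mx 0 k) = A k.
Proof.
rewrite /Defs.iota (bigD1 k) //= big1 => [|l hl]; first by rewrite mxE !eqxx scale1r addr0.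
by rewrite mxE (negbTE hl) andbF scale0r.
Qed.

Lemma pairing_delta (w : 'rV[R]_m) k : pairing w (delta_mx 0 k) = w 0 k.
Proof.
rewrite /pairing (bigD1 k) //= big1 => [|l hl]; first by rewrite mxE !eqxx mulr1 addr0.
by rewrite mxE (negbTE hl) andbF mulr0.
Qed.

Lemma tr_proj (psi : 'cV[C]_n) M : \tr (proj psi *m M) = inner psi (M *m psi).
Proof.
rewrite /proj -mulmxA mxtrace_mulC /inner /mxtrace big_ord1 mulmxA //.
Qed.

Lemma weightP (w : 'rV[R]_m) v : weight_vector A w v -> forall k, A k *m v = (w 0 k)%:C *: v.
Proof. by case=> _ h k; rewrite -iota_delta h pairing_delta. Qed.

Lemma iota_starP (psi : 'cV[C]_n) (rho : 'rV[R]_m) :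
  iota_star_is A (proj psi) rho <-> forall k, inner psi (A k *m psi) = (rho 0 k)%:C.
Proof.
split=> h.
  by move=> k; rewrite -tr_proj -iota_delta -h pairing_delta.
move=> v; rewrite /Defs.iota mulmx_sumr raddf_sum /pairing raddf_sum.
apply: eq_bigr => k _ /=. rewrite -scalemxAr mxtraceZ tr_proj h rmorphM /= mulrC //.
Qed.

Lemma weight_orth (hA : forall k, herm_mx (A k)) (a b : 'rV[R]_m) u v :
  weight_vector A a u -> weight_vector A b v -> a != b -> inner u v = 0.
Proof.
move=> hu hv hab.
have [k hk] : exists k, a 0 k != b 0 k.
  apply/existsP; apply: contraR hab => /existsPn h; apply/eqP/matrixP => i j.
  by rewrite (ord1 i); have := h j; rewrite negbK => /eqP.
have e1 : inner u (A k *m v) = (b 0 k)%:C * inner u v by rewrite (weightP hv) innerZr.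
have e2 : inner u (A k *m v) = (a 0 k)%:C * inner u v.
  by rewrite inner_herm // (weightP hu) innerZl conjCR.
have : ((a 0 k)%:C - (b 0 k)%:C) * inner u v = 0 by rewrite mulrBl -e1 -e2 subrr.
move/eqP; rewrite mulf_eq0 => /orP [|/eqP //].
by rewrite subr_eq0 => /eqP /complexI /eqP; rewrite (negbTE hk).
Qed.
End Weights.


Section Quad.
Variables (R : realType) (n : nat).
Local Notation C := (R[i]).

Lemma addConj (z : C) : z + z^*%C = (2 * complex.Re z)%:C.
Proof. by case: z => x y; simpc; rewrite /= mulr2n mulrDl mul1r. Qed.

Lemma quad_expand (M : 'M[C]_n) (u g : 'cV[C]_n) (a b : R) : herm_mx M ->
  inner (a%:C *: u + b%:C *: g) (M *m (a%:C *: u + b%:C *: g)) =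
  (a ^+ 2)%:C * inner u (M *m u) + (a * b * (2 * complex.Re (inner u (M *m g))))%:C
  + (b ^+ 2)%:C * inner g (M *m g).
Proof.
move=> hM.
rewrite mulmxDr -!scalemxAr !innerDl !innerDr !innerZl !innerZr !conjCR.
rewrite [inner g (M *m u)](inner_herm_conj g u hM).
set z := inner u (M *m g).
have -> : (a * b * (2 * complex.Re z))%:C = a%:C * b%:C * (z + z^*%C).
  by rewrite addConj !rmorphM.
rewrite !rmorphXn /=.
ring.
Qed.
End Quad.


Section Gamma.
Variables (R : realType) (m n : nat) (A : 'I_m -> 'M[R[i]]_n).
Hypothesis hA : forall k, herm_mx (A k).
Local Notation C := (R[i]).
Variables (K : nat) (P : pred 'I_K) (v : 'I_K -> 'cV[C]_n) (w : 'I_K -> 'rV[R]_m).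
Hypothesis hv : forall i, weight_vector A (w i) (v i).
Hypothesis hdist : forall i j, P i -> P j -> i != j -> w i != w j.

Lemma gamma_gen (c g : 'I_K -> C) :
  inner (\sum_(i | P i) c i *: v i) (\sum_(j | P j) (c j * g j) *: v j) =
  \sum_(i | P i) (c i)^*%C * c i * g i * inner (v i) (v i).
Proof.
rewrite inner_suml; apply: eq_bigr => i Pi.
rewrite inner_sumr (bigD1 i) //= big1 ?addr0.
  by rewrite innerZl innerZr; rewrite /=; ring.
move=> j /andP [Pj hji]; rewrite innerZl innerZr (weight_orth hA (hv i) (hv j)) ?mulr0 //.
by apply: hdist => //; rewrite eq_sym.
Qed.

Lemma gamma_norm (c : 'I_K -> C) :
  inner (\sum_(i | P i) c i *: v i) (\sum_(i | P i) c i *: v i) =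
  \sum_(i | P i) (c i)^*%C * c i * inner (v i) (v i).
Proof.
have := gamma_gen c (fun _ => 1).
have -> : \sum_(j | P j) (c j * 1) *: v j = \sum_(i | P i) c i *: v i.
  by apply: eq_bigr => i _; rewrite mulr1.
by move=> ->; apply: eq_bigr => i _; rewrite mulr1.
Qed.

Lemma A_gamma (c : 'I_K -> C) k :
  A k *m (\sum_(i | P i) c i *: v i) = \sum_(i | P i) (c i * (w i 0 k)%:C) *: v i.
Proof.
rewrite mulmx_sumr; apply: eq_bigr => i _.
by rewrite -scalemxAr (weightP (hv i)) scalerA.
Qed.

Lemma gamma_A (c : 'I_K -> C) k :
  inner (\sum_(i | P i) c i *: v i) (A k *m \sum_(i | P i) c i *: v i) =
  \sum_(i | P i) (c i)^*%C * c i * (w i 0 k)%:C * inner (v i) (v i).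
Proof. by rewrite A_gamma gamma_gen. Qed.
End Gamma.

Section ReLemmas.
Variable (R : realType).
Lemma ReD (x y : R[i]) : complex.Re (x + y) = complex.Re x + complex.Re y.
Proof. by case: x; case: y. Qed.
Lemma Re_sum (I : finType) (P : pred I) (F : I -> R[i]) :
  complex.Re (\sum_(i | P i) F i) = \sum_(i | P i) complex.Re (F i).
Proof. by apply: (big_morph _ (@ReD) (erefl _)). Qed.
Lemma ReRM (r : R) (x : R[i]) : complex.Re (r%:C * x) = r * complex.Re x.
Proof. by case: x => a b /=; rewrite !mul0r subr0. Qed.
End ReLemmas.


Section Coef.
Variable (R : realType).
Local Notation C := (R[i]).

Lemma normsq (u : C) : u^*%C * u = (complex.Re u ^+ 2 + complex.Im u ^+ 2)%:C.
Proof. case: u => a b; simpc; rewrite /= !expr2; congr (_ +i* _); ring. Qed.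

Lemma conjRM (r : R) (u : C) : ((r%:C * u)^*)%C = r%:C * u^*%C.
Proof. by case: u => a b; simpc. Qed.

Lemma normsq_gt0 (u : C) : u != 0 -> 0 < complex.Re u ^+ 2 + complex.Im u ^+ 2.
Proof.
case: u => a b hu /=.
have : (a != 0) || (b != 0).
  by rewrite -negb_and; apply: contra hu => /andP [/eqP -> /eqP ->].
have ha := sqr_ge0 a; have hb := sqr_ge0 b.
case/orP => h.
  have : 0 < a ^+ 2 by rewrite exprn_even_gt0.
  lra.
have : 0 < b ^+ 2 by rewrite exprn_even_gt0.
lra.
Qed.

Lemma phase_exists (z y : C) : exists u : C,
  [/\ u != 0, complex.Re (u * z) = 0 & (z = 0 -> y != 0 -> 0 < complex.Re (u * y))].
Proof.
have [z0|zn0] := eqVneq z 0.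
  have [y0|yn0] := eqVneq y 0.
    by exists 1; split; rewrite ?oner_eq0 // z0 mulr0.
  exists (y^*%C); split; first by rewrite conjc_eq0.
    by rewrite z0 mulr0.
  by move=> _ _; rewrite normsq /=; apply: normsq_gt0.
exists (complex.Im z +i* complex.Re z); split => //.
  apply: contra zn0; rewrite eq_complex /= => /andP [/eqP h1 /eqP h2].
  by move: h1 h2; case: z => a b /= -> ->.
  by case: z zn0 => a b _ /=; ring.
by move=> z0; rewrite z0 eqxx in zn0.
Qed.

Lemma coef_exists (N T : R) (z y : C) : 0 < N -> 0 <= T -> exists c : C,
  [/\ c^*%C * c * N%:C = T%:C, complex.Re (c * z) = 0, complex.Re (c * y) <= 0 &
      (z = 0 -> y != 0 -> 0 < T -> complex.Re (c * y) < 0)].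
Proof.
move=> hN hT.
have [u [un0 hz hy]] := phase_exists z y.
set U := complex.Re u ^+ 2 + complex.Im u ^+ 2.
have hU : 0 < U by apply: normsq_gt0.
set l0 := Num.sqrt (T / (N * U)).
have hl0 : 0 <= l0 by apply: sqrtr_ge0.
have hl0sq : l0 ^+ 2 = T / (N * U).
  by rewrite sqr_sqrtr // divr_ge0 // ?mulr_ge0 // ltW.
set s : R := if 0 < complex.Re (u * y) then -1 else 1.
exists ((s * l0)%:C * u); split.
- rewrite conjRM.
  have -> : (s * l0)%:C * u^*%C * ((s * l0)%:C * u) * N%:C =
            ((s * l0) ^+ 2 * N)%:C * (u^*%C * u).
    by rewrite !rmorphM ?rmorphXn /=; ring.
  rewrite normsq -rmorphM /=; congr (_%:C).
  rewrite exprMn hl0sq.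
  have -> : s ^+ 2 = 1 by rewrite /s; case: ifP => _; rewrite ?sqrrN expr1n.
  rewrite mul1r -/U; field.
  by apply/andP; split; apply: lt0r_neq0.
- by rewrite -mulrA ReRM hz mulr0.
- rewrite -mulrA ReRM /s; case: ifP => h.
    by rewrite -mulrA mulN1r; nra.
  by move/negbT: h; rewrite -leNgt => h; nra.
- move=> z0 yn0 hT0; rewrite -mulrA ReRM /s.
  have hp := hy z0 yn0; rewrite hp.
  have : 0 < l0 by rewrite sqrtr_gt0 divr_gt0 // mulr_gt0.
  nra.
Qed.

Lemma inner_self_real n (v : 'cV[C]_n) : exists N : R,
  inner v v = N%:C /\ (v != 0 -> 0 < N).
Proof.
exists (\sum_j (complex.Re (v j 0) ^+ 2 + complex.Im (v j 0) ^+ 2)); split.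
  rewrite /inner mxE rmorph_sum; apply: eq_bigr => j _.
  by rewrite !mxE normsq.
move=> vn0.
have [j hj] : exists j, v j 0 != 0.
  apply/existsP; apply: contraR vn0 => /existsPn h; apply/eqP/matrixP => a b.
  by rewrite (ord1 b) mxE; have := h a; rewrite negbK => /eqP.
rewrite (bigD1 j) //=; apply: ltr_pwDl; first exact: normsq_gt0.
by apply: sumr_ge0 => i _; apply: addr_ge0; apply: sqr_ge0.
Qed.
End Coef.


Section Dedup.
Variables (T : eqType) (K : nat) (w : 'I_K -> T).

Definition fdd (j : 'I_K) : 'I_K := [arg min_(i < j | w i == w j) val i].

Lemma fdd_spec j : w (fdd j) = w j /\ forall i, w i = w j -> (fdd j <= i)%N.
Proof.
rewrite /fdd; case: arg_minnP => [//|i /eqP hi hmin]; split => // l hl.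
by apply: hmin; apply/eqP.
Qed.

Lemma fdd_w j : w (fdd j) = w j. Proof. by case: (fdd_spec j). Qed.

Lemma fdd_idem j : fdd (fdd j) = fdd j.
Proof.
apply/val_inj/eqP; rewrite eqn_leq; apply/andP; split.
  by apply: (fdd_spec (fdd j)).2.
apply: (fdd_spec j).2; by rewrite !fdd_w.
Qed.

Lemma fdd_inj i j : fdd i = i -> fdd j = j -> w i = w j -> i = j.
Proof.
move=> hi hj hw; apply/val_inj/eqP; rewrite eqn_leq; apply/andP; split.
  by rewrite -{1}hi; apply: (fdd_spec i).2; rewrite hw.
by rewrite -{1}hj; apply: (fdd_spec j).2; rewrite hw.
Qed.

Lemma fdd_sum (V : zmodType) (F : 'I_K -> V) :
  \sum_j F j = \sum_(i | fdd i == i) \sum_(j | fdd j == i) F j.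
Proof.
rewrite (partition_big fdd (fun i => fdd i == i)) //=.
by move=> j _; rewrite fdd_idem.
Qed.
End Dedup.

Lemma fdd0 (T : eqType) K (w : 'I_K.+1 -> T) : fdd w ord0 = ord0.
Proof.
apply/val_inj/eqP; rewrite /= -leqn0; exact: ((fdd_spec w ord0).2 ord0 erefl).
Qed.


Lemma relint_push (R : realType) (m : nat) (S : 'rV[R]_m -> Prop) (rho alpha : 'rV[R]_m) :
  relint (conv S) rho -> S alpha ->
  exists s : R, 0 < s /\ conv S ((1 + s) *: rho - s *: alpha).
Proof.
move=> [hQ [e [he H]]] hS.
have hQa : conv S alpha.
  exists 1%N, (fun _ => alpha), (fun _ => 1); split => //; split => [_|]; first exact: ler01.
  by rewrite big_ord1; split => //; rewrite big_ord1 scale1r.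
set D := dist2 rho alpha.
have hD : 0 <= D by apply: sumr_ge0 => k _; apply: sqr_ge0.
set s := e / (D + 1).
have hs : 0 < s by rewrite divr_gt0 // ltr_pwDr.
exists s; split => //; apply: H.
  exists 2%N, (fun i : 'I_2 => if i == ord0 then rho else alpha),
    (fun i : 'I_2 => if i == ord0 then 1 + s else - s).
  split; first by move=> i; case: ifP.
  by rewrite !big_ord_recl !big_ord0 /=; split; [ring | rewrite scaleNr; rewrite addr0].
have -> : dist2 ((1 + s) *: rho - s *: alpha) rho = s ^+ 2 * D.
  rewrite /dist2 /D /dist2 mulr_sumr; apply: eq_bigr => k _; rewrite !mxE; ring.
have hD1 : 0 < D + 1 by rewrite ltr_pwDr.
rewrite /s expr_div_n.
have -> : e ^+ 2 / (D + 1) ^+ 2 * D = e ^+ 2 * (D / (D + 1) ^+ 2) by ring.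
rewrite -{2}[e ^+ 2]mulr1 ltr_pM2l ?exprn_gt0 //.
rewrite ltr_pdivrMr ?exprn_gt0 // mul1r; nra.
Qed.


Lemma final_arith (R : realType) (k w0 L Q : R) : 0 < k -> L < 0 ->
  (forall x, 0 < x -> k * x ^+ 2 <= 3 / 4 -> forall a, 0 <= a -> a ^+ 2 = 1 - k * x ^+ 2 ->
     w0 <= a ^+ 2 * w0 + 2 * a * x * L + x ^+ 2 * Q) -> False.
Proof.
move=> hk hL H.
set B := Q - k * w0.
have hB : 0 <= `|B| by [].
have hBB : B <= `|B| by apply: ler_norm.
have hB1 : 0 < `|B| + 1 by lra.
have hk1 : 0 < k + 1 by lra.
set x1 := - L / (2 * (`|B| + 1)).
set x2 := 1 / (2 * (k + 1)).
have hx1 : 0 < x1 by rewrite divr_gt0 ?oppr_gt0 // mulr_gt0.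
have hx2 : 0 < x2 by rewrite divr_gt0 // mulr_gt0.
have ex1 : x1 * (2 * (`|B| + 1)) = - L by rewrite /x1 mulfVK // mulf_neq0 // lt0r_neq0 // mulr_gt0.
have ex2 : x2 * (2 * (k + 1)) = 1 by rewrite /x2 mulfVK // mulf_neq0 // lt0r_neq0 // mulr_gt0.
have [x [hx0 hxa hxb]] : exists x, [/\ 0 < x, x <= x1 & x <= x2].
  by case: (leP x1 x2) => h; [exists x1 | exists x2]; split => //; rewrite ?lexx // ltW.
have hkx : k * x ^+ 2 <= 3 / 4.
  have h1 : x * (2 * (k + 1)) <= 1 by nra.
  have h2 : x <= 1 by nra.
  nra.
have h0 : 0 <= 1 - k * x ^+ 2 by lra.
set a := Num.sqrt (1 - k * x ^+ 2).
have ha0 : 0 <= a by apply: sqrtr_ge0.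
have ha2 : a ^+ 2 = 1 - k * x ^+ 2 by rewrite sqr_sqrtr.
have hH := H x hx0 hkx a ha0 ha2.
have ha : 1 / 2 <= a by nra.
have h3 : x * (2 * (`|B| + 1)) <= - L by nra.
have e1 : 0 <= x * (2 * a * L + x * B).
  move: hH; rewrite ha2 /B; nra.
have e2 : 0 <= 2 * a * L + x * B by move: e1; rewrite pmulr_rge0.
have e3 : 2 * a * L <= L by nra.
have e4 : x * B <= x * `|B| by nra.
nra.
Qed.


Lemma herm1 (R : realType) n : herm_mx (1%:M : 'M[R[i]]_n).
Proof. by apply/matrixP => i j; rewrite !mxE eq_sym; case: (_ == _); simpc. Qed.

Lemma realC (R : realType) (z : R[i]) : z = z^*%C -> z = (complex.Re z)%:C.
Proof. by case: z => a b /= [] h; congr (_ +i* _); lra. Qed.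

Unset Implicit Arguments.
Set Strict Implicit.

Theorem lemma4p22 (R : realType) (m n : nat)
  (A : 'I_m -> 'M[R[i]]_n) (W : 'M[R[i]]_n)
  (hA : forall k, herm_mx (A k))
  (hcomm : forall k l, A k *m A l = A l *m A k)
  (hW : herm_mx W)
  (rho : 'rV[R]_m)
  (hrho : relint (conv (is_weight A)) rho)
  (Phi : 'cV[R[i]]_n)
  (hnorm : inner Phi Phi = 1)
  (hPhi : iota_star_is A (proj Phi) rho)
  (hmin : forall Psi : 'cV[R[i]]_n, inner Psi Psi = 1 ->
            iota_star_is A (proj Psi) rho ->
            inner Phi (W *m Phi) <= inner Psi (W *m Psi))
  (alpha : 'rV[R]_m) (delta : 'cV[R[i]]_n)
  (hdelta : weight_vector A alpha delta)
  (horth : inner delta Phi = 0) :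
  inner delta (W *m Phi) = 0.
Proof.
case: (eqVneq (inner delta (W *m Phi)) 0) => // hz; exfalso.
have [s [hs hy]] := relint_push hrho (ex_intro _ delta hdelta : is_weight A alpha).
case: hy => k [p [t [hp [ht [ht1 hyeq]]]]].
have [chi hchi] := functional_choice (fun i psi => weight_vector A (p i) psi) hp.
pose w (j : 'I_k.+1) : 'rV[R]_m := if unlift ord0 j is Some i then p i else alpha.
pose vv (j : 'I_k.+1) : 'cV[R[i]]_n := if unlift ord0 j is Some i then chi i else delta.
pose Tm (j : 'I_k.+1) : R := if unlift ord0 j is Some i then t i / s else 1.
have hv : forall j, weight_vector A (w j) (vv j).
  by move=> j; rewrite /w /vv; case: unlift.
have hdist : forall i j, fdd w i == i -> fdd w j == j -> i != j -> w i != w j.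
  move=> i j /eqP hi /eqP hj; apply: contra => /eqP hw; apply/eqP; exact: fdd_inj hi hj hw.
pose Nf j := complex.Re (inner (vv j) (vv j)).
have hN : forall j, inner (vv j) (vv j) = (Nf j)%:C /\ 0 < Nf j.
  move=> j; have [N [e pos]] := inner_self_real (vv j); rewrite /Nf e /=; split => //.
  by apply: pos; case: (hv j).
pose T' i := \sum_(j | fdd w j == i) Tm j.
have hTm : forall j, 0 <= Tm j.
  by move=> j; rewrite /Tm; case: unlift => [i|//]; rewrite divr_ge0 // ltW.
have hT' : forall i, 0 <= T' i by move=> i; apply: sumr_ge0.
have [c hc] := functional_choice (fun i ci =>
  [/\ ci^*%C * ci * (Nf i)%:C = (T' i)%:C, complex.Re (ci * inner Phi (vv i)) = 0,
      complex.Re (ci * inner Phi (W *m vv i)) <= 0 &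
      (inner Phi (vv i) = 0 -> inner Phi (W *m vv i) != 0 -> 0 < T' i ->
         complex.Re (ci * inner Phi (W *m vv i)) < 0)])
  (fun i => coef_exists (inner Phi (vv i)) (inner Phi (W *m vv i)) (hN i).2 (hT' i)).
have hc1 : forall i, (c i)^*%C * c i * (Nf i)%:C = (T' i)%:C by move=> i; case: (hc i).
have hc2 : forall i, complex.Re (c i * inner Phi (vv i)) = 0 by move=> i; case: (hc i).
have hc3 : forall i, complex.Re (c i * inner Phi (W *m vv i)) <= 0 by move=> i; case: (hc i).
have hc4 : forall i, inner Phi (vv i) = 0 -> inner Phi (W *m vv i) != 0 -> 0 < T' i ->
    complex.Re (c i * inner Phi (W *m vv i)) < 0 by move=> i; case: (hc i).
pose G := \sum_(i | fdd w i == i) c i *: vv i.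
have Tm0 : Tm ord0 = 1 by rewrite /Tm unlift_none.
have TmS : forall i, Tm (lift ord0 i) = t i / s by move=> i; rewrite /Tm liftK.
have w0e : w ord0 = alpha by rewrite /w unlift_none.
have wS : forall i, w (lift ord0 i) = p i by move=> i; rewrite /w liftK.
have v0e : vv ord0 = delta by rewrite /vv unlift_none.
have hs0 : s != 0 by apply: lt0r_neq0.
have hsumT : \sum_j Tm j = 1 + 1 / s.
  rewrite big_ord_recl Tm0; congr (_ + _).
  under eq_bigr do rewrite TmS.
  by rewrite -mulr_suml ht1.
have hsumTw : forall kk, \sum_j Tm j * w j 0 kk = (1 + 1 / s) * rho 0 kk.
  move=> kk; rewrite big_ord_recl Tm0 w0e.
  under eq_bigr do rewrite TmS wS.
  have := congr1 (fun M : 'rV[R]_m => M 0 kk) hyeq; rewrite /= !mxE summxE => hk.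
  have -> : \sum_(i < k) t i / s * p i 0 kk = (\sum_(i < k) t i * p i 0 kk) / s.
    by rewrite mulr_suml; apply: eq_bigr => i _; field.
  move: hk; under [in X in _ = X -> _]eq_bigr do rewrite mxE.
  by move=> hk'; rewrite -hk'; field.
have hG1 : inner G G = (1 + 1 / s)%:C.
  rewrite /G (gamma_norm hA (P := fun i => fdd w i == i) hv hdist c).
  under eq_bigr => i _ do rewrite (hN i).1 (hc1 i).
  by rewrite -rmorph_sum /= -hsumT (fdd_sum w Tm).
have hGA : forall kk, inner G (A kk *m G) = ((1 + 1 / s) * rho 0 kk)%:C.
  move=> kk; rewrite /G (gamma_A hA (P := fun i => fdd w i == i) hv hdist c).
  rewrite (eq_bigr (fun i => (T' i * w i 0 kk)%:C)); last first.
    by move=> i _; rewrite (hN i).1 rmorphM /= -(hc1 i); ring.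
  rewrite -rmorph_sum /= -hsumTw (fdd_sum w (fun j => Tm j * w j 0 kk)).
  congr (_%:C); apply: eq_bigr => i _; rewrite /T' mulr_suml.
  by apply: eq_bigr => j /eqP hj; rewrite -(fdd_w w j) hj.
have hRe1 : complex.Re (inner Phi G) = 0.
  rewrite /G inner_sumr Re_sum big1 // => i _.
  by rewrite innerZr hc2.
have hReA : forall kk, complex.Re (inner Phi (A kk *m G)) = 0.
  move=> kk; rewrite /G (A_gamma (fun i => fdd w i == i) hv) inner_sumr Re_sum big1 // => i _.
  rewrite innerZr.
  have -> : c i * (w i 0 kk)%:C * inner Phi (vv i) = (w i 0 kk)%:C * (c i * inner Phi (vv i)) by ring.
  by rewrite ReRM hc2 mulr0.
pose L := complex.Re (inner Phi (W *m G)).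
have hL : L < 0.
  have P0 : fdd w ord0 == ord0 by rewrite fdd0.
  rewrite /L /G mulmx_sumr inner_sumr Re_sum (bigD1 ord0) //=.
  have h1 : \sum_(i | (fdd w i == i) && (i != ord0)) complex.Re (inner Phi (W *m (c i *: vv i))) <= 0.
    by apply: sumr_le0 => i _; rewrite -scalemxAr innerZr hc3.
  suff h2 : complex.Re (inner Phi (W *m (c ord0 *: vv ord0))) < 0 by lra.
  rewrite -scalemxAr innerZr; apply: hc4.
  - by rewrite v0e inner_conj horth conjc0.
  - by rewrite v0e (inner_herm_conj _ _ hW) conjc_eq0.
  - rewrite /T' (bigD1 ord0) //= Tm0.
    have : 0 <= \sum_(i | (fdd w i == ord0) && (i != ord0)) Tm i by apply: sumr_ge0.
    lra.
pose w0 := inner Phi (W *m Phi).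
have hw0 : w0 = (complex.Re w0)%:C by apply: realC; rewrite /w0 {1}(inner_herm_conj _ _ hW).
pose Q := inner G (W *m G).
have hQ : Q = (complex.Re Q)%:C by apply: realC; rewrite /Q {1}(inner_herm_conj _ _ hW).
have hs1 : 0 < 1 / s by rewrite divr_gt0.
have hk : 0 < 1 + 1 / s by lra.
apply: (@final_arith R (1 + 1 / s) (complex.Re w0) L (complex.Re Q) hk hL) => x hx0 hkx a ha0 ha2.
pose Psi := a%:C *: Phi + x%:C *: G.
have hPsi1 : inner Psi Psi = 1.
  have := quad_expand Phi G a x (herm1 R n); rewrite !mul1mx => ->.
  rewrite hnorm hRe1 hG1 mulr1 -rmorphM -!rmorphD /=.
  have -> : (1 : R[i]) = (1 : R)%:C by [].
  by congr (_%:C); rewrite ha2; field.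
move: (hPhi) => /iota_starP hPk.
have hPsiA : iota_star_is A (proj Psi) rho.
  apply/iota_starP => kk.
  rewrite (quad_expand Phi G a x (hA kk)) hPk hReA hGA.
  rewrite -!rmorphM -!rmorphD /=; congr (_%:C); rewrite ha2; field; exact: hs0.
have := hmin Psi hPsi1 hPsiA.
rewrite /Psi (quad_expand Phi G a x hW) -/w0 -/Q -/L hw0 hQ -!rmorphM -!rmorphD /= lecR.
rewrite -/w0 -/Q.
by move=> h; apply: (le_trans h); rewrite le_eqVlt; apply/orP; left; apply/eqP; ring.
Qed.
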